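(* Let $\mathcal{X}$ and $\mathcal{Y}$ be finite sets, let $n\ge1$ and $k\ge0$ be integers, and let $P_{\mathbf{y}|\mathbf{x}}$ be a channel from $\mathcal{X}^n$ to $\mathcal{Y}^n$. Let $P_{\mathbf{x}}$ be an arbitrary probability distribution on $\mathcal{X}^n$, let $s>0$ and $\lambda\in\mathbb{R}$. Let $(\mathbf{x},\mathbf{y},\bar{\mathbf{x}})$ be jointly distributed as $P_{\mathbf{x}}(\mathbf{x})P_{\mathbf{y}|\mathbf{x}}(\mathbf{y}|\mathbf{x})P_{\mathbf{x}}(\bar{\mathbf{x}})$. Define the generalized information density $$\imath_s(\mathbf{x},\mathbf{y})=\log_2\frac{P_{\mathbf{y}|\mathbf{x}}(\mathbf{y}|\mathbf{x})^s}{\mathbb{E}_{\bar{\mathbf{x}}}\big[P_{\mathbf{y}|\mathbf{x}}(\mathbf{y}|\bar{\mathbf{x}})^s\big]},$$ for each $\mathbf{y}$ the threshold $\tilde\lambda_{\mathbf{y}}=\big(2^{n\lambda}\,\mathbb{E}_{\bar{\mathbf{x}}}[P_{\mathbf{y}|\mathbf{x}}(\mathbf{y}|\bar{\mathbf{x}})^s]\big)^{1/s}$, and $$\widetilde{\mathrm{RCU}}_\lambda(k,n)=\mathbb{E}\Big[\min\Big\{1,(2^k-1)\Pr\big[P_{\mathbf{y}|\mathbf{x}}(\mathbf{y}|\bar{\mathbf{x}})\ge P_{\mathbf{y}|\mathbf{x}}(\mathbf{y}|\mathbf{x})\,\big|\,\mathbf{x},\mathbf{y}\big]\Big\}\,\mathbb{1}\{\imath_s(\mathbf{x},\mathbf{y})\ge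 n\lambda\}\Big],$$ $$\tilde\psi(\mathbf{y},\mathbf{x})=\Pr\Big[P_{\mathbf{y}|\mathbf{x}}(\mathbf{y}|\bar{\mathbf{x}})\ge\max\{P_{\mathbf{y}|\mathbf{x}}(\mathbf{y}|\mathbf{x}),\tilde\lambda_{\mathbf{y}}\}\,\Big|\,\mathbf{x},\mathbf{y}\Big].$$ Then there exists an $(n,k,\epsilon_{\mathsf T},\epsilon_{\mathsf U})$-code for $P_{\mathbf{y}|\mathbf{x}}$ satisfying simultaneously $$\epsilon_{\mathsf T}\le\widetilde{\mathrm{RCU}}_\lambda(k,n)+\Pr[\imath_s(\mathbf{x},\mathbf{y})<n\lambda]\qquad\text{and}\qquad \epsilon_{\mathsf U}\le\mathbb{E}\big[\min\{1,(2^k-1)\,\tilde\psi(\mathbf{y},\mathbf{x})\}\big].$$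
   Context: A channel from $\mathcal{X}^n$ to $\mathcal{Y}^n$ is a conditional probability mass function $P_{\mathbf{y}|\mathbf{x}}(\mathbf{y}|\mathbf{x})$, $\mathbf{x}\in\mathcal{X}^n$, $\mathbf{y}\in\mathcal{Y}^n$. (The paper notes the same statement applies to continuous alphabets with conditional densities in place of pmfs.) $\mathbb{1}\{\cdot\}$ is the indicator function; $\mathbb{E}_{\bar{\mathbf{x}}}$ denotes expectation over $\bar{\mathbf{x}}\sim P_{\mathbf{x}}$ with $\mathbf{y}$ fixed. Definition ($(n,k,\epsilon_{\mathsf T},\epsilon_{\mathsf U})$-code). An $(n,k,\epsilon_{\mathsf T},\epsilon_{\mathsf U})$-code for the channel $P_{\mathbf{y}|\mathbf{x}}$ consists of: (i) a discrete random variable $u$ with distribution $P_u$ on a set $\mathcal{U}$ with $|\mathcal{U}|\le 2$, known to both transmitter and receiver (common randomness); (ii) an encoder $\phi:\mathcal{U}\times\{1,\dots,2^k\}\to\mathcal{X}^n$; (iii) an erasure decoder $g:\mathcal{U}\times\mathcal{Y}^n\to\{0,1,\dots,2^k\}$, where output $0$ denotes an erasure. For each $u$ and $\hat w\in\{0,1,\dots,2^k\}$ let $\mathcal{D}_{u,\hat w}=\{\mathbf{y}: g(u,\mathbf{y})=\hat w\}$ (these partition $\mathcal{Y}^n$). The message $w$ is uniform on $\{1,\dots,2^k\}$ and independent of $u$, and given $u$ and $w=m$ the output $\mathbf{y}$ has law $P_{\mathbf{y}|\mathbf{x}}(\cdot\,|\,\phi(u,m))$. It is required that the total error probability and undetected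 error probability satisfy $$\frac{1}{2^k}\sum_{m=1}^{2^k}\sum_{\substack{m'=0\\ m'\ne m}}^{2^k}\Pr[\mathbf{y}\in\mathcal{D}_{u,m'}\mid w=m]\le\epsilon_{\mathsf T},\qquad \frac{1}{2^k}\sum_{m=1}^{2^k}\sum_{\substack{m'=1\\ m'\ne m}}^{2^k}\Pr[\mathbf{y}\in\mathcal{D}_{u,m'}\mid w=m]\le\epsilon_{\mathsf U},$$ where probabilities are over the pair $(u,\mathbf{y})$. *)

(* Defs.v *)
From HB Require Import structures.
From mathcomp Require Import all_boot all_order all_algebra.
From mathcomp Require Import all_classical all_reals exp.
Set Implicit Arguments. Unset Strict Implicit. Unset Printing Implicit Defensive.
Import Order.TTheory GRing.Theory Num.Theory.
Local Open Scope ring_scope.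

Section Defs.
Variable R : realType.

Definition is_pmf (T : finType) (P : T -> R) : Prop :=
  (forall t, 0 <= P t) /\ \sum_(t : T) P t = 1.

Definition is_channel (A B : finType) (W : A -> B -> R) : Prop :=
  forall a, is_pmf (W a).

Definition log2 (x : R) : R := ln x / ln 2.

Variables (A B : finType) (W : A -> B -> R) (Px : A -> R) (s : R).

Definition Ebar (y : B) : R := \sum_(xb : A) Px xb * (W xb y `^ s).

Definition info_s (x : A) (y : B) : R := log2 (W x y `^ s / Ebar y).

Definition Exy (f : A -> B -> R) : R :=
  \sum_(x : A) \sum_(y : B) Px x * W x y * f x y.

Definition Prbar (p : A -> bool) : R := \sum_(xb : A) Px xb * (p xb)%:R.

End Defs.

(* An (n,k,epsT,epsU)-code with common randomness u on U, |U| <= 2.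
   Messages {1,..,2^k} are represented by 'I_(2^k); the decoder output
   None is the erasure 0, Some m is message m. *)
Definition total_err (R : realType) (A B U : finType) (k : nat)
  (W : A -> B -> R) (Pu : U -> R) (enc : U -> 'I_(2^k) -> A)
  (dec : U -> B -> option 'I_(2^k)) : R :=
  (2^k)%:R^-1 * \sum_(m : 'I_(2^k)) \sum_(u : U) Pu u *
     \sum_(y : B) W (enc u m) y * (dec u y != Some m)%:R.

Definition undet_err (R : realType) (A B U : finType) (k : nat)
  (W : A -> B -> R) (Pu : U -> R) (enc : U -> 'I_(2^k) -> A)
  (dec : U -> B -> option 'I_(2^k)) : R :=
  (2^k)%:R^-1 * \sum_(m : 'I_(2^k)) \sum_(u : U) Pu u *
     \sum_(y : B) W (enc u m) y * ((dec u y != Some m) && (dec u y != None))%:R.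

Definition is_code (R : realType) (A B : finType) (k : nat) (W : A -> B -> R)
  (epsT epsU : R) : Prop :=
  exists (U : finType) (Pu : U -> R) (enc : U -> 'I_(2^k) -> A)
         (dec : U -> B -> option 'I_(2^k)),
    [/\ (#|U| <= 2)%N, is_pmf Pu,
        total_err W Pu enc dec <= epsT & undet_err W Pu enc dec <= epsU].

(* Main.v *)
Require Import Defs.
From HB Require Import structures.
From mathcomp Require Import all_boot all_order all_algebra.
From mathcomp Require Import all_classical all_reals exp.
From mathcomp Require Import ring lra.
Import Order.TTheory GRing.Theory Num.Theory.
Local Open Scope ring_scope.


Section TwoPoint.
Variable R : realType.

Lemma pos_sum (I : finType) (q z : I -> R) :
  (forall i, 0 <= q i) -> \sum_i q i = 1 -> (forall i, 0 < z i) ->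
  0 < \sum_i q i * z i.
Proof.
move=> q0 q1 z0; rewrite lt_def sumr_ge0 ?andbT; last first.
  by move=> i _; rewrite mulr_ge0 // ltW.
apply/eqP => H.
have Hq : forall i, q i = 0.
  move=> i; have F0 : forall j, xpredT j -> 0 <= q j * z j.
    by move=> j _; rewrite mulr_ge0 // ltW.
  have := @psumr_eq0P R I xpredT (fun i => q i * z i) F0 H i isT.
  by move/eqP; rewrite mulf_eq0 (gt_eqF (z0 i)) orbF => /eqP.
by move: q1; rewrite big1 // => /esym/eqP; rewrite oner_eq0.
Qed.

Lemma two_point (I : finType) (q t v : I -> R) (a b : R) :
  (forall i, 0 <= q i) -> \sum_i q i = 1 ->
  \sum_i q i * t i <= a -> \sum_i q i * v i <= b ->
  exists i j (th : R), [/\ 0 <= th <= 1,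
     th * t i + (1 - th) * t j <= a & th * v i + (1 - th) * v j <= b].
Proof.
move=> q0 q1 Ht Hv.
have qa : forall c, \sum_i q i * c = c.
  by move=> c; rewrite -mulr_suml q1 mul1r.
case: (boolP [exists i, (t i <= a) && (v i <= b)]).
  case/existsP=> i /andP[ti vi]; exists i, i, 1; split.
  - by rewrite lexx ler01.
  - by rewrite subrr mul0r addr0 mul1r.
  - by rewrite subrr mul0r addr0 mul1r.
rewrite negb_exists => /forallP Hn.
have Hn' : forall i, t i <= a -> b < v i.
  by move=> i ti; have := Hn i; rewrite ti /= -ltNge.
have [i0 ti0] : exists i, t i <= a.
  case: (boolP [exists i, t i <= a]) => [/existsP //|].
  rewrite negb_exists => /forallP Hg; exfalso.
  have : 0 < \sum_i q i * (t i - a).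
    apply: pos_sum => // i; have := Hg i; rewrite -ltNge subr_gt0 //.
  rewrite ltNge; move/negP; apply.
  under eq_bigr do rewrite mulrBr.
  by rewrite sumrB qa subr_le0.
pose r i := (a - t i) / (v i - b).
pose P := [pred i | t i <= a].
have Pi0 : P i0 by [].
case: (@arg_maxP _ _ I i0 P r Pi0) => ist Pis Hmax.
move: Pis; rewrite /P /= => tis.
have xis : 0 < v ist - b by rewrite subr_gt0 Hn'.
have rs0 : 0 <= r ist by apply: divr_ge0; [rewrite subr_ge0 | exact: ltW].
pose f k := (t k - a) + r ist * (v k - b).
case: (boolP [exists j, (a < t j) && (f j <= 0)]); last first.
  rewrite negb_exists => /forallP Hf; exfalso.
  have HfG : forall j, a < t j -> 0 < f j.
    by move=> j tj; have := Hf j; rewrite tj /= -ltNge.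
  have HfL : forall i, t i <= a -> 0 <= f i.
    move=> i ti; have H : r i <= r ist by exact: (Hmax i ti).
    have xi : 0 < v i - b by rewrite subr_gt0 Hn'.
    move: H; rewrite {1}/r ler_pdivrMr // /f.
    set c := r ist * _; lra.
  have Hf0 : forall k, 0 <= f k.
    by move=> k; case: (leP (t k) a) => [/HfL|/HfG/ltW].
  have Hsum : \sum_k q k * f k <= 0.
    rewrite /f; under eq_bigr do rewrite mulrDr mulrBr mulrCA mulrBr.
    rewrite big_split /= -mulr_sumr !sumrB !qa.
    have h1 : r ist * (\sum_i q i * v i - b) <= 0.
      by rewrite mulr_ge0_le0 // subr_le0.
    have h2 : \sum_i q i * t i - a <= 0 by rewrite subr_le0.
    by have := lerD h2 h1; rewrite addr0.
  have Hq0 : forall k, q k * f k = 0.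
    move=> k; apply: (@psumr_eq0P R I xpredT (fun k => q k * f k)) => //.
      by move=> j _; rewrite mulr_ge0.
    by apply/eqP; rewrite eq_le Hsum sumr_ge0 // => j _; rewrite mulr_ge0.
  have HqG : forall j, a < t j -> q j = 0.
    move=> j tj; have := Hq0 j; move/eqP; rewrite mulf_eq0.
    by rewrite (gt_eqF (HfG j tj)) orbF => /eqP.
  pose z k := if t k <= a then v k - b else 1.
  have : 0 < \sum_k q k * z k.
    by apply: pos_sum => // k; rewrite /z; case: ifP => // /Hn'; rewrite subr_gt0.
  rewrite ltNge; move/negP; apply.
  have -> : \sum_k q k * z k = \sum_k q k * (v k - b).
    apply: eq_bigr => k _; rewrite /z; case: leP => // tk.
    by rewrite HqG // !mul0r.
  under eq_bigr do rewrite mulrBr.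
  by rewrite sumrB qa subr_le0.
case/existsP=> j /andP[tj fj].
pose al := a - t ist. pose be := t j - a.
have al0 : 0 <= al by rewrite subr_ge0.
have be0 : 0 < be by rewrite subr_gt0.
have ab0 : 0 < al + be by rewrite ltr_wpDl.
have abn : al + be != 0 by rewrite gt_eqF.
have xn : v ist - b != 0 by rewrite gt_eqF.
pose th := be / (al + be).
exists ist, j, th; split.
- apply/andP; split; first by apply: divr_ge0; exact: ltW.
  by rewrite /th ler_pdivrMr // mul1r lerDr.
- rewrite le_eqVlt; apply/orP; left; apply/eqP.
  rewrite /th /al /be; field.
  by move: abn; rewrite /al /be.
- have key : be * (v ist - b) + al * (v j - b) <= 0.
    have -> : be * (v ist - b) + al * (v j - b) = (v ist - b) * f j.
      by rewrite /f /r /be /al; field.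
    by rewrite mulr_ge0_le0 // ltW.
  have -> : th * v ist + (1 - th) * v j =
      b + (be * (v ist - b) + al * (v j - b)) / (al + be).
    by rewrite /th; field.
  by rewrite gerDl mulr_le0_ge0 // invr_ge0 ltW.
Qed.

End TwoPoint.

Section Main.
Variables (R : realType) (A B : finType) (k : nat) (W : A -> B -> R) (Px : A -> R).
Hypotheses (Px0 : forall x, 0 <= Px x) (Px1 : \sum_x Px x = 1)
  (W0 : forall x y, 0 <= W x y).

Lemma prod_D1 {I : finType} {F : I -> R} i0 :
  (forall i, i != i0 -> F i = 1) -> \prod_i F i = F i0.
Proof.
move=> H; rewrite (bigD1 i0) //= big1 ?mulr1 // => i; exact: H.
Qed.

Lemma prod_D2 {I : finType} {F : I -> R} {i0 i1 : I} : i1 != i0 ->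
  (forall i, i != i0 -> i != i1 -> F i = 1) -> \prod_i F i = F i0 * F i1.
Proof.
move=> H01 H; rewrite (bigD1 i0) //= (bigD1 i1) //= big1 ?mulr1 //.
by move=> i /andP[H1 H2]; apply: H.
Qed.

Definition Q (C : {ffun 'I_(2^k) -> A}) : R := \prod_i Px (C i).

Lemma Q_ge0 C : 0 <= Q C.
Proof. by apply: prodr_ge0 => i _. Qed.

Lemma marg (F : 'I_(2^k) -> A -> R) :
  \sum_(C : {ffun 'I_(2^k) -> A}) Q C * \prod_i F i (C i)
  = \prod_i \sum_x Px x * F i x.
Proof.
rewrite bigA_distr_bigA; apply: eq_bigr => C _.
by rewrite /Q -big_split.
Qed.

Lemma sumQ : \sum_C Q C = 1.
Proof.
have := marg (fun _ _ => 1).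
have -> : \prod_(i < 2^k) \sum_x Px x * 1 = 1.
  by rewrite big1 // => i _; under eq_bigr do rewrite mulr1.
move=> <-; apply: eq_bigr => C _.
by rewrite big1_eq mulr1.
Qed.

Lemma sum_pred1 x0 : \sum_x Px x * (x == x0)%:R = Px x0.
Proof.
rewrite (bigD1 x0) //= eqxx mulr1 big1 ?addr0 // => x /negbTE ->.
by rewrite mulr0.
Qed.

Lemma marg1 m (f : A -> R) :
  \sum_C Q C * f (C m) = \sum_x Px x * f x.
Proof.
pose F i := if i == m then f else (fun _ : A => 1 : R).
have := marg F.
have -> : \prod_i \sum_x Px x * F i x = \sum_x Px x * f x.
  rewrite (prod_D1 m) => [|i Hi]; rewrite /F ?eqxx ?(negbTE Hi) //.
  by under eq_bigr do rewrite mulr1.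
move=> <-; apply: eq_bigr => C _; congr (_ * _).
by rewrite (prod_D1 m) => [|i Hi]; rewrite /F ?eqxx ?(negbTE Hi).
Qed.

Lemma marg2 m m' (f g : A -> R) : m' != m ->
  \sum_C Q C * (f (C m) * g (C m')) = (\sum_x Px x * f x) * (\sum_x Px x * g x).
Proof.
move=> Hm.
pose F i := if i == m then f else if i == m' then g else (fun _ : A => 1 : R).
have := marg F.
have -> : \prod_i \sum_x Px x * F i x = (\sum_x Px x * f x) * (\sum_x Px x * g x).
  rewrite (prod_D2 Hm) => [|i Hi Hi']; rewrite /F ?eqxx ?(negbTE Hm) ?eqxx //.
  rewrite (negbTE Hi) (negbTE Hi').
  by under eq_bigr do rewrite mulr1.
move=> <-; apply: eq_bigr => C _; congr (_ * _).
rewrite (prod_D2 Hm) => [|i Hi Hi']; rewrite /F ?eqxx ?(negbTE Hm) ?eqxx //.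
by rewrite (negbTE Hi) (negbTE Hi').
Qed.

Definition Mk : R := (2^k - 1)%:R.

Lemma sum_neq (m : 'I_(2^k)) (c : R) : \sum_(m' | m' != m) c = Mk * c.
Proof.
have H : \sum_(i : 'I_(2^k)) c = c *+ 2^k by rewrite sumr_const card_ord.
rewrite (bigD1 m) //= in H.
apply: (@addrI _ c); rewrite H /Mk natrB ?expn_gt0 // -mulr_natl.
by ring.
Qed.

Lemma key m (h : A -> R) (phi : A -> A -> bool) : (forall x, 0 <= h x) ->
  \sum_C Q C * (h (C m) * Num.min 1 (\sum_(m' | m' != m) (phi (C m) (C m'))%:R))
  <= \sum_x Px x * (h x * Num.min 1 (Mk * Prbar Px (phi x))).
Proof.
move=> h0.
pose S (x : A) (C : {ffun 'I_(2^k) -> A}) : R := \sum_(m' | m' != m) (phi x (C m'))%:R.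
have S0 : forall x C, 0 <= S x C by move=> x C; apply: sumr_ge0 => i _.
have E1 : forall C, Q C * (h (C m) * Num.min 1 (S (C m) C)) =
    \sum_x Q C * ((C m == x)%:R * (h x * Num.min 1 (S x C))).
  move=> C; rewrite -mulr_sumr (bigD1 (C m)) //= eqxx mul1r big1 ?addr0 //.
  by move=> x /negbTE; rewrite eq_sym => ->; rewrite mul0r.
rewrite (eq_bigr _ (fun C _ => E1 C)) exchange_big /=.
apply: ler_sum => x _.
have -> : \sum_C Q C * ((C m == x)%:R * (h x * Num.min 1 (S x C))) =
    h x * \sum_C (Q C * (C m == x)%:R) * Num.min 1 (S x C).
  by rewrite mulr_sumr; apply: eq_bigr => C _; ring.
rewrite mulrCA; apply: ler_wpM2l => //.
rewrite minr_pMr // le_min; apply/andP; split.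
  apply: (@le_trans _ _ (\sum_C Q C * (C m == x)%:R)).
    apply: ler_sum => C _; rewrite -[X in _ <= X]mulr1.
    apply: ler_wpM2l; first by rewrite mulr_ge0 ?Q_ge0.
    by rewrite ge_min lexx.
  by rewrite (marg1 m (fun z => (z == x)%:R)) sum_pred1 mulr1.
apply: (@le_trans _ _ (\sum_C Q C * (C m == x)%:R * S x C)).
  apply: ler_sum => C _; apply: ler_wpM2l; first by rewrite mulr_ge0 ?Q_ge0.
  by rewrite ge_min lexx orbT.
have -> : \sum_C Q C * (C m == x)%:R * S x C =
    \sum_(m' | m' != m) \sum_C Q C * ((C m == x)%:R * (phi x (C m'))%:R).
  rewrite exchange_big /=; apply: eq_bigr => C _.
  rewrite /S mulr_sumr; apply: eq_bigr => m' _; by rewrite mulrA.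
rewrite (eq_bigr (fun _ => Px x * Prbar Px (phi x))); last first.
  move=> m' Hm'; rewrite (marg2 m m' (fun z => (z == x)%:R) (fun z => (phi x z)%:R) Hm').
  by rewrite sum_pred1.
by rewrite sum_neq mulrCA.
Qed.

Variables (thr : B -> R) (good : A -> B -> bool).
Hypothesis Hthr : forall x y, 0 < Px x -> 0 < W x y -> good x y -> thr y <= W x y.

Lemma K_gt0 : (0 < 2^k)%N.
Proof. by rewrite expn_gt0. Qed.

Definition i0 : 'I_(2^k) := Ordinal K_gt0.

Definition dec (C : {ffun 'I_(2^k) -> A}) (y : B) : option 'I_(2^k) :=
  let ms := Order.arg_max i0 xpredT (fun m => W (C m) y) in
  if (0 < W (C ms) y) && (thr y <= W (C ms) y) then Some ms else None.

Lemma Q_pos C m : 0 < Q C -> 0 < Px (C m).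
Proof.
move=> HQ; rewrite lt_def Px0 andbT; apply/eqP => H0.
by move: HQ; rewrite /Q (bigD1 m) //= H0 mul0r ltxx.
Qed.

Lemma S_ge1 (phi : A -> A -> bool) C (m ms : 'I_(2^k)) : ms != m -> phi (C m) (C ms) ->
  Num.min 1 (\sum_(m' | m' != m) (phi (C m) (C m'))%:R) = 1 :> R.
Proof.
move=> Hne Hp; rewrite min_l // (bigD1 ms) //= Hp lerDl.
by apply: sumr_ge0 => i _.
Qed.

Lemma min_ge0 (C : {ffun 'I_(2^k) -> A}) (m : 'I_(2^k)) (phi : A -> A -> bool) :
  0 <= Num.min 1 (\sum_(m' | m' != m) (phi (C m) (C m'))%:R) :> R.
Proof. by rewrite le_min ler01 /=; apply: sumr_ge0 => i _. Qed.

Lemma errT C m y : 0 < Q C ->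
  W (C m) y * (dec C y != Some m)%:R <=
  W (C m) y * (Num.min 1 (\sum_(m' | m' != m) (W (C m) y <= W (C m') y)%R%:R)
                 * (good (C m) y)%:R + (~~ good (C m) y)%:R).
Proof.
move=> /(@Q_pos C m) HP.
have [W0'|Wp] : W (C m) y = 0 \/ 0 < W (C m) y.
  by have := W0 (C m) y; rewrite le_eqVlt => /orP[/eqP <-|]; [left|right].
  by rewrite W0' !mul0r.
apply: ler_wpM2l => //.
case: (boolP (good (C m) y)) => Hg /=; last first.
  by rewrite mulr0 add0r; case: (_ != _).
rewrite mulr1 addr0.
case Hd: (dec C y == Some m) => /=; first by rewrite le_min ler01 /=; apply: sumr_ge0.
move: Hd; rewrite /dec; case: arg_maxP => //= ms _ Hms.
case: (eqVneq ms m) => [-> | Hne].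
  by rewrite Wp /= (Hthr _ _ HP Wp Hg) eqxx.
move=> _; rewrite (@S_ge1 (fun a b => W a y <= W b y) C m ms Hne) //.
exact: (Hms m isT).
Qed.

Lemma errU (C : {ffun 'I_(2^k) -> A}) (m : 'I_(2^k)) y :
  W (C m) y * ((dec C y != Some m) && (dec C y != None))%:R <=
  W (C m) y * Num.min 1 (\sum_(m' | m' != m) (Num.max (W (C m) y) (thr y) <= W (C m') y)%R%:R).
Proof.
apply: ler_wpM2l => //.
rewrite /dec; case: arg_maxP => //= ms _ Hms.
case: ifP => [/andP[hp ht] | _]; last by rewrite le_min ler01 /=; apply: sumr_ge0.
case: (eqVneq ms m) => [-> | Hne]; first by rewrite eqxx /= le_min ler01 /=; apply: sumr_ge0.
rewrite (@S_ge1 (fun a b => Num.max (W a y) (thr y) <= W b y) C m ms Hne) //.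
  by case: (_ && _).
by rewrite /= ge_max ht andbT; exact: (Hms m isT).
Qed.

Definition Tdet (C : {ffun 'I_(2^k) -> A}) : R := (2^k)%:R^-1 *
  \sum_(m : 'I_(2^k)) \sum_y W (C m) y * (dec C y != Some m)%:R.
Definition Udet (C : {ffun 'I_(2^k) -> A}) : R := (2^k)%:R^-1 *
  \sum_(m : 'I_(2^k)) \sum_y W (C m) y * ((dec C y != Some m) && (dec C y != None))%:R.

Lemma avg_gen (F : {ffun 'I_(2^k) -> A} -> 'I_(2^k) -> R) (bd : R) :
  (forall m, \sum_C Q C * F C m <= bd) ->
  \sum_C Q C * ((2^k)%:R^-1 * \sum_m F C m) <= bd.
Proof.
move=> H.
have -> : \sum_C Q C * ((2^k)%:R^-1 * \sum_m F C m) =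
    (2^k)%:R^-1 * \sum_m \sum_C Q C * F C m.
  rewrite exchange_big mulr_sumr; apply: eq_bigr => C _.
  by rewrite mulrCA mulr_sumr.
apply: (le_trans (ler_wpM2l _ (ler_sum _ (fun m _ => H m)))).
  by rewrite invr_ge0 ler0n.
have -> : \sum_(i < 2^k) bd = bd *+ 2^k by rewrite sumr_const card_ord.
rewrite -[bd *+ _]mulr_natl mulrA mulVf ?mul1r //.
by rewrite pnatr_eq0 -lt0n expn_gt0.
Qed.

Definition BT : R :=
  Exy W Px (fun x y => Num.min 1 (Mk * Prbar Px (fun xb => W x y <= W xb y))
                       * (good x y)%:R)
  + Exy W Px (fun x y => (~~ good x y)%:R).

Definition BU : R :=
  Exy W Px (fun x y =>
    Num.min 1 (Mk * Prbar Px (fun xb => Num.max (W x y) (thr y) <= W xb y))).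

Lemma avgT : \sum_C Q C * Tdet C <= BT.
Proof.
apply: avg_gen => m.
apply: (@le_trans _ _ (\sum_C Q C * \sum_y W (C m) y *
  (Num.min 1 (\sum_(m' | m' != m) (W (C m) y <= W (C m') y)%R%:R)
                 * (good (C m) y)%:R + (~~ good (C m) y)%:R))).
  apply: ler_sum => C _.
  case: (eqVneq (Q C) 0) => [->|HQ]; first by rewrite !mul0r.
  have HQp : 0 < Q C by rewrite lt_def HQ Q_ge0.
  apply: ler_wpM2l; first exact: Q_ge0.
  by apply: ler_sum => y _; exact: errT.
have -> : \sum_C Q C * \sum_y W (C m) y *
  (Num.min 1 (\sum_(m' | m' != m) (W (C m) y <= W (C m') y)%R%:R)
                 * (good (C m) y)%:R + (~~ good (C m) y)%:R) =
  \sum_y (\sum_C Q C * ((fun x => W x y * (good x y)%:R) (C m) *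
       Num.min 1 (\sum_(m' | m' != m) ((fun a b => W a y <= W b y) (C m) (C m'))%:R))
    + \sum_C Q C * ((fun x => W x y * (~~ good x y)%:R) (C m))).
  under eq_bigr do rewrite mulr_sumr.
  rewrite exchange_big; apply: eq_bigr => y _; rewrite -big_split.
  by apply: eq_bigr => C _ /=; ring.
apply: (@le_trans _ _ (\sum_y (\sum_x Px x * ((fun x => W x y * (good x y)%:R) x *
     Num.min 1 (Mk * Prbar Px ((fun a b => W a y <= W b y) x)))
    + \sum_x Px x * ((fun x => W x y * (~~ good x y)%:R) x)))).
  apply: ler_sum => y _; apply: lerD.
    by apply: key => x; rewrite mulr_ge0.
  by rewrite (marg1 m (fun x => W x y * (~~ good x y)%:R)).
rewrite /BT /Exy le_eqVlt; apply/orP; left; apply/eqP.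
rewrite -big_split /=.
under [RHS]eq_bigr do rewrite -big_split.
under eq_bigr do rewrite -big_split.
rewrite [RHS]exchange_big /=; apply: eq_bigr => y _.
by apply: eq_bigr => x _; ring.
Qed.

Lemma avgU : \sum_C Q C * Udet C <= BU.
Proof.
apply: avg_gen => m.
apply: (@le_trans _ _ (\sum_C Q C * \sum_y W (C m) y *
  Num.min 1 (\sum_(m' | m' != m) (Num.max (W (C m) y) (thr y) <= W (C m') y)%R%:R))).
  apply: ler_sum => C _; apply: ler_wpM2l; first exact: Q_ge0.
  by apply: ler_sum => y _; exact: errU.
have -> : \sum_C Q C * \sum_y W (C m) y *
  Num.min 1 (\sum_(m' | m' != m) (Num.max (W (C m) y) (thr y) <= W (C m') y)%R%:R) =
  \sum_y \sum_C Q C * ((fun x => W x y) (C m) *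
       Num.min 1 (\sum_(m' | m' != m) ((fun a b => Num.max (W a y) (thr y) <= W b y) (C m) (C m'))%:R)).
  under eq_bigr do rewrite mulr_sumr.
  by rewrite exchange_big.
apply: (@le_trans _ _ (\sum_y \sum_x Px x * ((fun x => W x y) x *
     Num.min 1 (Mk * Prbar Px ((fun a b => Num.max (W a y) (thr y) <= W b y) x))))).
  by apply: ler_sum => y _; apply: key => x.
rewrite /BU /Exy le_eqVlt; apply/orP; left; apply/eqP.
rewrite exchange_big /=; apply: eq_bigr => y _.
by apply: eq_bigr => x _; rewrite mulrA.
Qed.

End Main.

Lemma analytic (R : realType) (A B : finType) (W : A -> B -> R) (Px : A -> R) (s nl : R)
  (x : A) (y : B) :
  (forall x, 0 <= Px x) -> (forall x y, 0 <= W x y) -> 0 < s ->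
  0 < Px x -> 0 < W x y -> nl <= info_s W Px s x y ->
  (2 `^ nl * Ebar W Px s y) `^ (s^-1) <= W x y.
Proof.
move=> Px0 W0 hs HP Wp H.
have Ep : 0 < Ebar W Px s y.
  rewrite /Ebar (bigD1 x) //=; apply: ltr_wpDr.
    by apply: sumr_ge0 => i _; rewrite mulr_ge0 ?powR_ge0.
  by rewrite mulr_gt0 ?powR_gt0.
have l2 : 0 < ln (2 : R) by apply: ln_gt0; rewrite ltr1n.
move: H; rewrite /info_s /log2 ler_pdivlMr // => H.
have H2 : 2 `^ nl * Ebar W Px s y <= W x y `^ s.
  rewrite -ler_pdivlMr //.
  have -> : 2 `^ nl = sequences.expR (nl * ln 2) :> R by rewrite /powR pnatr_eq0.
  rewrite -[W x y `^ s / _]lnK; first by rewrite ler_expR.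
  by rewrite posrE divr_gt0 // powR_gt0.
have hr : 0 <= s^-1 by rewrite invr_ge0 ltW.
apply: (le_trans (ge0_ler_powR hr _ _ H2)).
- by rewrite nnegrE mulr_ge0 ?powR_ge0 // ltW.
- by rewrite nnegrE powR_ge0.
by rewrite -powRrM mulfV ?gt_eqF // powRr1 // ltW.
Qed.

Theorem theorem2 (R : realType) (X Y : finType) (n k : nat)
  (W : n.-tuple X -> n.-tuple Y -> R) (Px : n.-tuple X -> R) (s lam : R) :
  (1 <= n)%N -> is_channel W -> is_pmf Px -> 0 < s ->
  let M : R := (2^k - 1)%:R in
  let nl : R := n%:R * lam in
  let lamt (y : n.-tuple Y) : R := (2 `^ nl * Ebar W Px s y) `^ (s^-1) in
  let RCU : R := Exy W Px (fun x y =>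
      Num.min 1 (M * Prbar Px (fun xb => W x y <= W xb y))
      * (nl <= info_s W Px s x y)%R%:R) in
  let Pbad : R := Exy W Px (fun x y => (info_s W Px s x y < nl)%R%:R) in
  let psit (y : n.-tuple Y) (x : n.-tuple X) : R :=
      Prbar Px (fun xb => Num.max (W x y) (lamt y) <= W xb y) in
  is_code k W (RCU + Pbad) (Exy W Px (fun x y => Num.min 1 (M * psit y x))).
Proof.
move=> hn hW [Px0 Px1] hs M nl lamt RCU Pbad psit.
have W0 : forall x y, 0 <= W x y by move=> x y; exact: ((hW x).1 y).
pose good x y := (nl <= info_s W Px s x y)%R.
have Hthr : forall x y, 0 < Px x -> 0 < W x y -> good x y -> lamt y <= W x y.
  by move=> x y HP Wp Hg; apply: analytic.
have HT := avgT R _ _ k W Px Px0 Px1 W0 lamt good Hthr.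
have HU := avgU R _ _ k W Px Px0 Px1 W0 lamt.
have HBT : BT R _ _ k W Px good = RCU + Pbad.
  rewrite /BT /RCU /Pbad; congr (_ + _).
  by rewrite /Exy; apply: eq_bigr => x _; apply: eq_bigr => y _; rewrite ltNge.
rewrite HBT in HT.
have [Ci [Cj [th [/andP[th0 th1] HTt HUt]]]] :=
  @two_point R _ _ _ _ _ _ (Q_ge0 R _ k Px Px0) (sumQ R _ k Px Px1) HT HU.
pose Cb (b : bool) := if b then Ci else Cj.
exists bool, (fun b => if b then th else 1 - th), (fun b => Cb b : 'I_(2^k) -> _),
  (fun b => dec R _ _ k W lamt (Cb b)); split.
- by rewrite card_bool.
- split; first by case => //; rewrite subr_ge0.
  by rewrite big_bool /= addrC subrK.
- apply: le_trans HTt; rewrite le_eqVlt; apply/orP; left; apply/eqP.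
  rewrite /total_err /Tdet; under eq_bigr do rewrite big_bool /=.
  rewrite big_split /= -!mulr_sumr; ring.
- apply: le_trans HUt; rewrite le_eqVlt; apply/orP; left; apply/eqP.
  rewrite /undet_err /Udet; under eq_bigr do rewrite big_bool /=.
  rewrite big_split /= -!mulr_sumr; ring.
Qed.
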